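(* Let $T$ be a tree with positive edge-lengths, let $\Sigma\subseteq V(T)$ be a set of sites and $s\in\Sigma$. For each vertex $v\in\mathrm{cell}_T(s,\Sigma)$, the path in $T$ from $s$ to $v$ is contained in the subgraph $T[\mathrm{cell}_T(s,\Sigma)]$ induced by $\mathrm{cell}_T(s,\Sigma)$. Likewise, for each $v\in \mathrm{cell}^<_T(s,\Sigma)$, the path in $T$ from $s$ to $v$ is contained in $T[\mathrm{cell}^<_T(s,\Sigma)]$.
   Context: $d_T$ is the shortest-path distance in $T$. For $s\in\Sigma$, $\mathrm{cell}_T(s,\Sigma)=\{x\in V(T)\mid d_T(s,x)\le d_T(s',x)\ \forall s'\in\Sigma\}$ and $\mathrm{cell}^<_T(s,\Sigma)=\{x\in V(T)\mid d_T(s,x)< d_T(s',x)\ \forall s'\in\Sigma\setminus\{s\}\}$. *)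

(* Defs.v *)
From HB Require Import structures.
From mathcomp Require Import all_boot all_order all_algebra.
From mathcomp Require Import classical_sets reals.
Set Implicit Arguments. Unset Strict Implicit. Unset Printing Implicit Defensive.
Import Order.TTheory GRing.Theory Num.Theory.
Local Open Scope ring_scope.
Local Open Scope classical_set_scope.

(* A (finite, simple, undirected) graph on a finType V is a symmetric,
   irreflexive relation e. Walks are ssreflect paths: x :: p with
   consecutive vertices adjacent. *)

Definition walk {V : finType} (e : rel V) (x y : V) (p : seq V) : bool :=
  path e x p && (last x p == y).

Definition connected_graph {V : finType} (e : rel V) : Prop :=
  forall x y : V, exists p : seq V, walk e x y p.

(* no cycle: no closed walk x :: p -> x on >= 3 distinct vertices *)
Definition acyclic {V : finType} (e : rel V) : Prop :=
  forall (x : V) (p : seq V),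
    path e x p -> uniq (x :: p) -> (2 <= size p)%N -> ~~ e (last x p) x.

Definition is_tree {V : finType} (e : rel V) : Prop :=
  symmetric e /\ irreflexive e /\ connected_graph e /\ acyclic e.

Definition pos_lengths {V : finType} {R : realType} (e : rel V)
  (w : V -> V -> R) : Prop :=
  (forall x y, w x y = w y x) /\ (forall x y, e x y -> 0 < w x y).

Definition wlen {V : finType} {R : realType} (w : V -> V -> R)
  (x : V) (p : seq V) : R :=
  \sum_(ab <- zip (x :: p) p) w ab.1 ab.2.

Definition dist {V : finType} {R : realType} (e : rel V) (w : V -> V -> R)
  (x y : V) : R :=
  inf [set wlen w x p | p in [set p : seq V | walk e x y p]].

Definition cell {V : finType} {R : realType} (e : rel V) (w : V -> V -> R)
  (Sigma : {set V}) (s : V) : {set V} :=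
  [set x | [forall s', (s' \in Sigma) ==> (dist e w s x <= dist e w s' x)]].

Definition cell_strict {V : finType} {R : realType} (e : rel V)
  (w : V -> V -> R) (Sigma : {set V}) (s : V) : {set V} :=
  [set x | [forall s', (s' \in Sigma :\ s) ==> (dist e w s x < dist e w s' x)]].

(* Main.v *)
Require Import Defs.
From HB Require Import structures.
From mathcomp Require Import all_boot all_order all_algebra.
From mathcomp Require Import classical_sets reals.
From mathcomp Require Import lra.
Import Order.TTheory GRing.Theory Num.Theory.
Local Open Scope ring_scope.
Set Implicit Arguments. Unset Strict Implicit.
Lemma visit (V : finType) (e : rel V) (s v u : V) (p q : seq V) :
  symmetric e -> acyclic e -> walk e s v p -> uniq (s :: p) -> u \in s :: p ->
  walk e s v q -> u \in s :: q.
Proof.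
move=> esym acyc /andP[pp /eqP lp] up up_in /andP[pq /eqP lq].
apply/negPn/negP => uq.
have us : u != s by apply: contraNneq uq => ->; rewrite mem_head.
have uv : u != v by apply: contraNneq uq => ->; rewrite -lq mem_last.
have up' : u \in p by move: up_in; rewrite inE (negbTE us).
case/splitPr: up' pp lp up => p1 p2.
rewrite cat_path last_cat => /andP[pp1 eaup] lp.
simpl in lp; case/andP: eaup => eau pp2.
rewrite -cat_cons cat_uniq => /and3P[_ hdis up2].
case: p2 pp2 lp hdis up2 => [|b p2]; first by move=> _ /= lp; rewrite lp eqxx in uv.
move=> /= /andP[eub pp2] lp hdis /andP[ub _].
set a := last s p1 in eau.
pose e' := [rel x y | [&& e x y, x != u & y != u]].
have lift : forall x r, path e x r -> all (predC1 u) (x :: r) -> path e' x r.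
  move=> x r; elim: r x => [|y r IH] x //= /andP[exy pr] /and3P[xu yu ar].
  by rewrite /= exy xu yu /= IH //= yu.
have unlift : forall x r, path e' x r -> all (predC1 u) r.
  move=> x r; elim: r x => [|y r IH] x //= /andP[/and3P[_ _ yu] pr].
  by rewrite yu (IH y).
have symc : connect_sym e'.
  apply: sym_connect_sym => x y /=; rewrite esym; by do 2 case: (_ != u).
have us1 : u \notin s :: p1.
  by apply: contra hdis => ->.
have c1 : connect e' s a.
  apply/connectP; exists p1 => //; apply: lift => //.
  by apply/allP => x xin /=; apply: contraNneq us1 => <-.
have c2 : connect e' s v.
  apply/connectP; exists q => //; apply: lift => //.
  by apply/allP => x xin /=; apply: contraNneq uq => <-.
have c3 : connect e' b v.
  apply/connectP; exists p2 => //; apply: lift => //.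
  by apply/allP => x xin /=; apply: contraNneq ub => <-.
have cab : connect e' a b.
  by apply: connect_trans (connect_trans _ _) _; [rewrite symc; exact c1|exact c2|rewrite symc].
case/connectP: cab => r0 pr0 lr0.
case/shortenP: pr0 lr0 => r pr ur _ lr.
have au : a != u by apply: contraNneq us1 => <-; rewrite /a mem_last.
have ab : a != b.
  by apply: contraNneq hdis => <-; rewrite /a mem_last orbT.
case: r pr ur lr => [|c r] pr ur lr; first by rewrite /= in lr; rewrite lr eqxx in ab.
have P1 : path e u [:: a, c & r].
  move: pr; rewrite /= => /andP[/and3P[-> _ _] pr].
  rewrite esym eau /=; apply: sub_path pr => x y /and3P[] //.
have P2 : uniq (u :: [:: a, c & r]).
  have := unlift _ _ pr; rewrite /= => /andP[cu ar].
  rewrite !inE negb_or (eq_sym u a) au /= negb_or (eq_sym u c) cu /=.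
  move: ur; rewrite /= inE => /andP[-> /andP[-> ->]]; rewrite !andbT; apply/negP => ur'; by move/allP: ar => /(_ u ur') /=; rewrite eqxx.
have := acyc u _ P1 P2 isT.
simpl in lr; rewrite /= -lr esym eub //.
Qed.
Section D.
Variables (R : realType) (V : finType) (e : rel V) (w : V -> V -> R).
Hypothesis hw : pos_lengths e w.
Hypothesis hc : connected_graph e.

Lemma wlen_cat x p1 p2 : wlen w x (p1 ++ p2) = wlen w x p1 + wlen w (last x p1) p2.
Proof.
elim: p1 x => [|y p1 IH] x /=; first by rewrite /wlen /= big_nil add0r.
by rewrite /wlen /= !big_cons -/(wlen w y _) IH addrA.
Qed.

Lemma wlen_ge0 x p : path e x p -> 0 <= wlen w x p.
Proof.
elim: p x => [|y p IH] x /=; first by rewrite /wlen big_nil.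
case/andP=> exy pp; rewrite /wlen big_cons -/(wlen w y _) addr_ge0 ?IH //.
by apply: ltW; apply: hw.2.
Qed.

Lemma dist_le x y p : walk e x y p -> dist e w x y <= wlen w x p.
Proof.
move=> wp; have : has_lbound [set wlen w x p | p in [set p : seq V | walk e x y p]].
  by exists 0 => z [q /andP[pq _] <-]; apply: wlen_ge0.
by move/ge_inf; apply; exists p.
Qed.

Lemma dist_ge x y a : (forall p, walk e x y p -> a <= wlen w x p) -> a <= dist e w x y.
Proof.
move=> H; apply: lb_le_inf.
  by case: (hc x y) => p wp; exists (wlen w x p); exists p.
by move=> z [q wq <-]; apply: H.
Qed.

Lemma walk_cat x y z p q : walk e x y p -> walk e y z q -> walk e x z (p ++ q).
Proof.
move=> /andP[pp /eqP lp] /andP[pq /eqP lq].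
by rewrite /walk cat_path last_cat lp pp pq lq eqxx.
Qed.

Lemma dist_tri x y z : dist e w x z <= dist e w x y + dist e w y z.
Proof.
rewrite -lerBlDr; refine (@dist_ge x y _ _) => p wp; rewrite lerBlDl -lerBlDr.
refine (@dist_ge y z _ _) => q wq; rewrite lerBlDl.
have <- : last x p = y by case/andP: wp => _ /eqP.
rewrite -wlen_cat.
exact: dist_le (walk_cat wp wq).
Qed.

Lemma dist_split s v u p : is_tree e -> walk e s v p -> uniq (s :: p) -> u \in s :: p ->
  dist e w s u + dist e w u v <= dist e w s v.
Proof.
move=> [esym [_ [_ acyc]]] wp up uin; refine (@dist_ge s v _ _) => q wq.
have := visit esym acyc wp up uin wq.
move=> H; case/splitPl: H wq => q1 q2 lq1 /andP[]; rewrite cat_path last_cat lq1 => /andP[pq1 pq2] lq2.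
rewrite wlen_cat lq1 lerD //; apply: dist_le; by rewrite /walk ?pq1 ?lq1 ?pq2 ?lq2 ?eqxx.
Qed.

End D.
Unset Implicit Arguments. Set Strict Implicit.
Theorem lemma2 (R : realType) (V : finType) (e : rel V) (w : V -> V -> R)
  (Sigma : {set V}) (s : V) :
  is_tree e -> pos_lengths e w -> s \in Sigma ->
  (forall (v : V) (p : seq V),
     v \in cell e w Sigma s -> walk e s v p -> uniq (s :: p) ->
     (forall u, u \in s :: p -> u \in cell e w Sigma s)) /\
  (forall (v : V) (p : seq V),
     v \in cell_strict e w Sigma s -> walk e s v p -> uniq (s :: p) ->
     (forall u, u \in s :: p -> u \in cell_strict e w Sigma s)).
Proof.
move=> tr hw _; have hc := tr.2.2.1.
have key : forall v p u s', walk e s v p -> uniq (s :: p) -> u \in s :: p ->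
  dist e w s u - dist e w s' u <= dist e w s v - dist e w s' v.
  move=> v p u s' wp up uin.
  have h1 := dist_split hw hc tr wp up uin.
  have h2 := dist_tri hw hc s' u v.
  lra.
split=> v p; rewrite inE => /forallP Hv wp up u uin; rewrite inE;
  apply/forallP => s'; apply/implyP => s'S;
  have := implyP (Hv s') s'S; have := key v p u s' wp up uin; lra.
Qed.
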